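(* Let $R=(\mathbb{C},\mathbb{C}^4,\mathbb{C};u_0,\dots,u_3,v_0,\dots,v_3)$ be a representation of $\mathbf{Q}$ with dimension vector $(1,4,1)$. Then: (1) $R$ is globally injective if and only if $R$ has no subrepresentation of dimension vector $(1,b,1)$ with $b\in\{0,1,2,3\}$; (2) $R$ is globally surjective if and only if $R$ has no subrepresentation of dimension vector $(0,b,0)$ with $b\in\{1,2,3,4\}$.
   Context: The quiver $\mathbf{Q}$ has vertices $-1,0,1$, arrows $\eta_0,\dots,\eta_3:-1\to0$, $\phi_0,\dots,\phi_3:0\to1$ and relations $\phi_i\eta_j+\phi_j\eta_i=0$; a representation consists of vector spaces $V_{-1},V_0,V_1$ and linear maps $u_i:V_{-1}\to V_0$, $v_i:V_0\to V_1$ with $v_iu_j+v_ju_i=0$ for all $i,j$. $R$ is globally injective if $\sum_i\lambda_iu_i$ is injective for all $\lambda\in\mathbb{C}^4\setminus\{0\}$, and globally surjective if $\sum_i\lambda_iv_i$ is surjective for all $\lambda\in\mathbb{C}^4\setminus\{0\}$. *)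

(* Defs.v *)
From HB Require Import structures.
From mathcomp Require Import all_boot all_order all_algebra.
From mathcomp Require Import complex.
From mathcomp Require Import Rstruct.
Set Implicit Arguments. Unset Strict Implicit. Unset Printing Implicit Defensive.
Import Order.TTheory GRing.Theory Num.Theory.
Local Open Scope ring_scope.

Definition C : Type := complex Rdefinitions.R.

(* Linear maps are matrices acting on row vectors from the right:
   u i : 'M_(1,4) is a map C^1 -> C^4,  v i : 'M_(4,1) a map C^4 -> C^1.
   The composite v_i o u_j is u j *m v i. *)

Definition is_repQ (u : 'I_4 -> 'M[C]_(1,4)) (v : 'I_4 -> 'M[C]_(4,1)) : Prop :=
  forall i j : 'I_4, u j *m v i + u i *m v j = 0.

Definition lin_injective (m n : nat) (A : 'M[C]_(m,n)) : Prop :=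
  forall x y : 'rV[C]_m, x *m A = y *m A -> x = y.

Definition lin_surjective (m n : nat) (A : 'M[C]_(m,n)) : Prop :=
  forall y : 'rV[C]_n, exists x : 'rV[C]_m, x *m A = y.

Definition globally_injective (u : 'I_4 -> 'M[C]_(1,4)) : Prop :=
  forall lam : 'rV[C]_4, lam != 0 -> lin_injective (\sum_(i < 4) lam 0 i *: u i).

Definition globally_surjective (v : 'I_4 -> 'M[C]_(4,1)) : Prop :=
  forall lam : 'rV[C]_4, lam != 0 -> lin_surjective (\sum_(i < 4) lam 0 i *: v i).

(* A subrepresentation: subspaces W1 <= C, W0 <= C^4, W2 <= C (given as
   row spaces of matrices) stable under all the maps u_i, v_i. *)
Definition is_subrep (u : 'I_4 -> 'M[C]_(1,4)) (v : 'I_4 -> 'M[C]_(4,1))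
  (W1 : 'M[C]_1) (W0 : 'M[C]_4) (W2 : 'M[C]_1) : Prop :=
  forall i : 'I_4, (W1 *m u i <= W0)%MS /\ (W0 *m v i <= W2)%MS.

Definition has_subrep_dim (u : 'I_4 -> 'M[C]_(1,4)) (v : 'I_4 -> 'M[C]_(4,1))
  (a b c : nat) : Prop :=
  exists (W1 : 'M[C]_1) (W0 : 'M[C]_4) (W2 : 'M[C]_1),
    is_subrep u v W1 W0 W2 /\ \rank W1 = a /\ \rank W0 = b /\ \rank W2 = c.

(* Main.v *)
Require Import Defs.
From HB Require Import structures.
From mathcomp Require Import all_boot all_order all_algebra.
From mathcomp Require Import complex.
From mathcomp Require Import Rstruct.
Import Order.TTheory GRing.Theory Num.Theory.
Local Open Scope ring_scope.

Lemma inj1 (A : 'M[C]_(1,4)) : lin_injective A <-> A != 0.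
Proof.
split.
- move=> H; apply/eqP => A0.
  have := H 0 1; rewrite A0 !mulmx0 => /(_ erefl) /eqP.
  by rewrite eq_sym oner_eq0.
- move=> A0 x y; rewrite [x]mx11_scalar [y]mx11_scalar !mul_scalar_mx => /eqP.
  rewrite -subr_eq0 -scalerBl scaler_eq0 (negbTE A0) orbF subr_eq0 => /eqP ->.
  by [].
Qed.

Lemma surj1 (A : 'M[C]_(4,1)) : lin_surjective A <-> A != 0.
Proof.
split.
- move=> H; apply/eqP => A0.
  have [x] := H 1; rewrite A0 mulmx0 => /eqP.
  by rewrite eq_sym oner_eq0.
- move=> A0 y.
  have rf : row_full A.
    rewrite /row_full eqn_leq rank_leq_col lt0n mxrank_eq0 //.
  have /submxP [D ->] : (y <= A)%MS by apply: submx_full.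
  by exists D.
Qed.

Lemma free_iff (A : 'M[C]_4) :
  (forall x : 'rV[C]_4, x != 0 -> x *m A != 0) <-> row_free A.
Proof.
split; last by move=> rf x x0; rewrite mulmx_free_eq0.
move=> H; rewrite -kermx_eq0; apply/negPn/negP => nK.
case/boolP: [exists i, row i (kermx A) != 0].
- case/existsP => i Hi; have := H _ Hi.
  by rewrite -row_mul mulmx_ker row0 eqxx.
- rewrite negb_exists => /forallP Hall; move/negP: nK; apply.
  apply/eqP/row_matrixP => i; rewrite row0; apply/eqP.
  by move: (Hall i); rewrite negbK.
Qed.

Theorem mainTheorem8 (u : 'I_4 -> 'M[C]_(1,4)) (v : 'I_4 -> 'M[C]_(4,1)) :
  is_repQ u v ->
  (globally_injective u <->
     ~ (exists b : nat, (b <= 3)%N /\ has_subrep_dim u v 1 b 1)) /\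
  (globally_surjective v <->
     ~ (exists b : nat, (1 <= b <= 4)%N /\ has_subrep_dim u v 0 b 0)).
Proof.
move=> _.
pose U : 'M[C]_4 := \matrix_(i < 4) u i.
have rU i : row i U = u i by rewrite rowK.
have hU lam : lam *m U = \sum_(i < 4) lam 0 i *: u i.
  by rewrite mulmx_sum_row; apply: eq_bigr => i _; rewrite rU.
pose V : 'M[C]_4 := \matrix_(j < 4, i < 4) v i j 0.
have hV m (W : 'M[C]_(m,4)) r i : (W *m V) r i = (W *m v i) r 0.
  by rewrite !mxE; apply: eq_bigr => j _; rewrite mxE.
have hL lam : lam *m V^T = (\sum_(i < 4) lam 0 i *: v i)^T.
  apply/matrixP => a b; rewrite !mxE summxE; apply: eq_bigr => i _.
  by rewrite !mxE (ord1 a).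
split.
- have hG : globally_injective u <-> row_free U.
    rewrite -free_iff; split=> H lam l0.
    + by rewrite hU -inj1; apply: H.
    + by apply/inj1; rewrite -hU; apply: H.
  apply: (iff_trans hG); split.
  + move=> rf [b [b3 [W1 [W0 [W2 [Hs [r1 [r0 r2]]]]]]]].
    have W10 : W1 0 0 != 0.
      apply/negP => /eqP e; move: r1; rewrite [W1]mx11_scalar e.
      have -> : (0 : C)%:M = 0 :> 'M_1 by apply/matrixP => p q; rewrite !mxE mul0rn.
      by rewrite mxrank0.
    have sU : (U <= W0)%MS.
      apply/row_subP => i; rewrite rU.
      have -> : u i = (W1 0 0)^-1 *: (W1 *m u i).
        by rewrite {2}[W1]mx11_scalar mul_scalar_mx scalerA mulVf // scale1r.
      by apply: scalemx_sub; case: (Hs i).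
    have := mxrankS sU; rewrite r0 (eqP rf) => h.
    by have := leq_trans h b3.
  + move=> H; apply/negPn/negP => nf; apply: H.
    exists (\rank U); split.
      by rewrite -ltnS ltn_neqAle nf rank_leq_row.
    exists 1%:M, U, 1%:M; split; last by rewrite !mxrank1.
    move=> i; split; first by rewrite mul1mx -rU row_sub.
    exact: submx1.
- have hG : globally_surjective v <-> row_free V.
    rewrite /row_free -mxrank_tr -free_iff; split=> H lam l0.
    + by rewrite hL trmx_eq0 -surj1; apply: H.
    + by apply/surj1; rewrite -trmx_eq0 -hL; apply: H.
  apply: (iff_trans hG); split.
  + move=> rf [b [hb [W1 [W0 [W2 [Hs [r1 [r0 r2]]]]]]]].
    have W2z : W2 = 0 by apply/eqP; rewrite -mxrank_eq0 r2.
    have WV : W0 *m V = 0.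
      apply/matrixP => r i; rewrite hV.
      have := (Hs i).2; rewrite W2z submx0 => /eqP ->.
      by rewrite !mxE.
    have : W0 == 0 by rewrite -(mulmx_free_eq0 _ rf) WV.
    move/eqP => W0z; move: r0 hb; rewrite W0z mxrank0 => <-.
    by [].
  + move=> H; apply/negPn/negP => nf; apply: H.
    exists (\rank (kermx V)); split.
      rewrite rank_leq_row andbT lt0n mxrank_eq0 kermx_eq0 //.
    exists 0, (kermx V), 0; split; last by rewrite !mxrank0.
    move=> i; split; first by rewrite mul0mx sub0mx.
    rewrite submx0; apply/eqP/matrixP => r k; rewrite (ord1 k) -hV mulmx_ker.
    by rewrite !mxE.
Qed.
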